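(* Let $q$ be a power of $2$ and let $F$ be a field of characteristic $2$ containing $\mathbb{F}_q$. Let $L\in F[x]$ be a $q$-polynomial of $q$-degree $n$ with distinct roots. Then, unless $q=n=2$, the Galois group of $L$ over $F$, considered as a permutation group on the $q^n-1$ roots of $L(x)/x$, is contained in the alternating group $A_{q^n-1}$.
   Context: A $q$-polynomial over a field $F\supseteq\mathbb{F}_q$ is a polynomial of the form $a_0x+a_1x^q+\cdots+a_nx^{q^n}\in F[x]$; if $a_n\neq 0$ its $q$-degree is $n$. *)

(* Defs.v *)
From HB Require Import structures.
From mathcomp Require Import all_boot all_order all_algebra all_fingroup all_field.
Set Implicit Arguments. Unset Strict Implicit. Unset Printing Implicit Defensive.
Import GRing.Theory.
Local Open Scope ring_scope.

Definition is_qpoly (F : fieldType) (q n : nat) (L : {poly F}) : Prop :=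
  exists a : nat -> F, a n != 0 /\
    L = \sum_(i < n.+1) (a i)%:P * 'X^(q ^ i).

Definition contains_Fq (F : fieldType) (q : nat) : Prop :=
  exists (K : finFieldType) (f : {rmorphism K -> F}), #|K| = q.

(* Main.v *)
Require Import Defs.
From HB Require Import structures.
From mathcomp Require Import all_boot all_order all_algebra all_fingroup all_field.
From mathcomp Require Import zify ring.
Set Implicit Arguments. Unset Strict Implicit. Unset Printing Implicit Defensive.
Import GRing.Theory.
Section PermParity.

Variable T : finType.
Implicit Types p : {perm T}.

Lemma porbit_dvd p x k : (((p ^+ k)%g) x == x) = (#|porbit p x| %| k).
Proof.
set n := #|porbit p x|.
have n0 : 0 < n by rewrite lt0n card_porbit_neq0.
have itn : forall t, iter (t * n) p x = x.
  by elim=> [//|t IH]; rewrite mulSn iterD IH iter_porbit.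
rewrite permX {1}(divn_eq k n) addnC iterD itn /dvdn.
have : k %% n < n by rewrite ltn_mod.
move: (k %% n) => r rn.
case: r rn => [|r] rn; first by rewrite /= !eqxx.
apply/negP => /eqP E.
have U := uniq_traject_porbit p x.
have Hr := nth_traject p rn x.
rewrite E in Hr.
have := index_uniq x (i:=r.+1) (s:=traject p x n).
rewrite size_traject Hr => /(_ rn U).
by case: n n0 U rn {itn E Hr} => // n _ U rn; rewrite /= eqxx.
Qed.

Lemma sum_porbits (G : nat -> nat) p :
  \sum_(x in T) G #|porbit p x| = \sum_(O in porbits p) #|O| * G #|O|.
Proof.
rewrite (partition_big_imset (porbit p)) /=.
apply: eq_bigr => O /imsetP [y _ ->].
rewrite (eq_bigr (fun _ => G #|porbit p y|)); last by move=> x /eqP ->.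
rewrite (eq_bigl (fun x => x \in porbit p y)); last by move=> x; rewrite eq_porbit_mem.
by rewrite sum_nat_const.
Qed.

Lemma odd_sumE (I : finType) (A : {pred I}) (F : I -> nat) :
  odd (\sum_(i in A) F i) = \big[addb/false]_(i in A) odd (F i).
Proof. by apply: (big_morph odd oddD). Qed.

Lemma sum_ind_pow2 e a : 
  \sum_(j < a) (e == j.+1 :> nat) = ((0 < e) && (e <= a)).
Proof.
elim: a => [|a IH]; first by rewrite big_ord0; case: e.
rewrite big_ord_recr /= IH {IH}.
case: e => [//|e]; rewrite !ltnS /= eqSS.
case: (ltngtP e a) => H //=.
Qed.

Lemma odd_perm_pow2 p a : (p ^+ (2 ^ a))%g = 1%g ->
  odd_perm p = \big[addb/false]_(j < a)
    odd ((\sum_(x in T) (#|porbit p x| == 2 ^ j.+1)) %/ 2 ^ j.+1).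
Proof.
move=> pa.
have ordP x : exists2 e, e <= a & #|porbit p x| = 2 ^ e.
  apply/(dvdn_pfactor _ _ (isT : prime 2)); rewrite -porbit_dvd pa perm1 //.
have cT : #|T| = \sum_(O in porbits p) #|O| * 1.
  by rewrite -(sum_porbits (fun=> 1)) sum1_card.
have cP : #|porbits p| = \sum_(O in porbits p) 1 by rewrite sum1_card.
rewrite /odd_perm cT cP !odd_sumE -big_split /=.
have step : forall O, O \in porbits p ->
  odd (#|O| * 1) (+) odd 1 = \big[addb/false]_(j < a) (#|O| == 2 ^ j.+1).
  move=> O /imsetP [y _ ->]; have [e ea ->] := ordP y.
  have -> : \big[addb/false]_(j < a) (2 ^ e == 2 ^ j.+1) =
            odd (\sum_(j < a) (nat_of_bool (2 ^ e == 2 ^ j.+1))).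
    by rewrite (big_morph odd oddD (erefl : odd 0 = false));
       apply: eq_bigr => j _; rewrite oddb.
  rewrite (eq_bigr (fun j : 'I_a => nat_of_bool (e == j.+1))); last first.
    by move=> j _; rewrite eqn_exp2l.
  rewrite sum_ind_pow2 ea andbT muln1 oddX /=.
  by case: e {ea}.
rewrite (eq_bigr _ step) exchange_big /=.
apply: eq_bigr => j _.
rewrite (sum_porbits (fun n => (n == 2 ^ j.+1 : nat))).
rewrite (eq_bigr (fun O : {set T} => 2 ^ j.+1 * nat_of_bool (#|O| == 2 ^ j.+1))); last first.
  by move=> O _; case: eqP => [->|]; rewrite ?muln0 ?muln1 ?mulnC.
rewrite -big_distrr /= mulKn ?expn_gt0 //.
by rewrite odd_sumE; apply: eq_bigr => O _; rewrite oddb.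
Qed.
End PermParity.
Section Core.
Variable T : finType.
Variable z : T.
Variable add : T -> T -> T.
Hypothesis addA : associative add.
Hypothesis addC : commutative add.
Hypothesis add0 : left_id z add.
Hypothesis addxx : forall x, add x x = z.

Lemma addK x y : add (add x y) y = x.
Proof. by rewrite -addA addxx addC add0. Qed.

Lemma addACA a b c d : add (add a b) (add c d) = add (add a c) (add b d).
Proof. by rewrite -!addA (addA b) (addC b) -addA. Qed.

Lemma add_inj x : injective (add x).
Proof. by move=> a b E; rewrite -(addK a x) -(addK b x) !(addC _ x) E. Qed.

Definition cl (S : {set T}) := z \in S /\ forall x y, x \in S -> y \in S -> add x y \in S.

Lemma pow2_closed S : cl S -> exists e, #|S| = 2 ^ e.
Proof.
move=> [zS clS].
suff H : forall n (U : {set T}) d, #|S| - #|U| <= n -> cl U -> U \subset S -> #|U| = 2 ^ d ->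
  exists e, #|S| = 2 ^ e.
  apply: (H #|S| [set z] 0) => //; first exact: leq_subr.
  - split; first by rewrite inE.
    by move=> x y; rewrite !inE => /eqP -> /eqP ->; rewrite add0.
  - by rewrite sub1set.
  - by rewrite cards1.
elim=> [|n IH] U d hn [zU clU] US cU.
  exists d; rewrite -cU; apply/eqP; rewrite eqn_leq (subset_leq_card US) andbT.
  by rewrite -subn_eq0 -leqn0.
have [SU|] := boolP (S \subset U).
  by exists d; rewrite -cU; apply/eqP; rewrite eqn_leq !subset_leq_card.
case/subsetPn => x xS xU.
pose U' := U :|: [set add x u | u in U].
have dis : [disjoint U & [set add x u | u in U]].
  apply/pred0P => w /=; apply/negP => /andP [wU /imsetP [u uU E]].
  by move: xU; rewrite -(addK x u) -E clU.
have cU' : #|U'| = 2 ^ d.+1.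
  rewrite cardsU disjoint_setI0 // cards0 subn0 card_imset ?cU ?expnS ?mul2n ?addnn //.
  exact: add_inj.
apply: (IH U' d.+1).
- have le : #|U'| <= #|S|.
    rewrite subset_leq_card // subUset US; apply/subsetP => w /imsetP [u uU ->].
    by apply: clS => //; apply: (subsetP US).
  have pos : 0 < 2 ^ d by rewrite expn_gt0.
  move: hn le pos; rewrite cU' expnS cU; set t := 2 ^ d; lia.
- split; first by rewrite inE zU.
  move=> a b; rewrite !inE => /orP [aU | /imsetP [u uU ->]] /orP [bU | /imsetP [v vU ->]].
  + by rewrite clU.
  + apply/orP; right; apply/imsetP; exists (add a v); first exact: clU.
    by rewrite addA (addC a) -addA.
  + apply/orP; right; apply/imsetP; exists (add u b); first exact: clU.
    by rewrite addA.
  + by apply/orP; left; rewrite addACA addxx add0 clU.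
- rewrite subUset US; apply/subsetP => w /imsetP [u uU ->]; apply: clS => //.
  exact: (subsetP US).
- exact: cU'.
Qed.

Definition additive (f : T -> T) := forall x y, f (add x y) = add (f x) (f y).

Lemma additive0 f : additive f -> f z = z.
Proof. by move=> fA; have := fA z z; rewrite !addxx. Qed.

Lemma additive_iter f i : additive f -> additive (iter i f).
Proof. by move=> fA; elim: i => [//|i IH] x y /=; rewrite IH fA. Qed.

Section KSec.
Variable f : T -> T.
Hypothesis fA : additive f.

Definition K i := [set x | iter i f x == z].

Lemma clK i : cl (K i).
Proof.
rewrite /cl; split; first by rewrite inE (additive0 (additive_iter i fA)).
by move=> x y; rewrite !inE additive_iter // => /eqP -> /eqP ->; rewrite addxx.
Qed.

Lemma K_sub i : K i \subset K i.+1.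
Proof. by apply/subsetP => x; rewrite !inE /= => /eqP ->; rewrite additive0. Qed.

Lemma K_mono i j : i <= j -> K i \subset K j.
Proof.
move=> /subnK <-; elim: (j - i) => [//|k IH].
by apply: subset_trans IH _; rewrite addSn K_sub.
Qed.

Lemma K_stab i : K i = K i.+1 -> K i.+1 = K i.+2.
Proof.
move=> Ei; apply/eqP; rewrite eqEsubset K_sub /=; apply/subsetP => x.
rewrite inE iterSr => fx.
have : f x \in K i by rewrite Ei inE.
by rewrite !inE -iterSr.
Qed.

Lemma K_stab_all i : K i = K i.+1 -> forall j, i <= j -> K j = K i.
Proof.
move=> Ei j /subnK <-.
suff : K ((j - i) + i) = K i /\ K ((j - i) + i) = K ((j - i) + i).+1 by case.
elim: (j - i) => [//|k [IH1 IH2]].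
rewrite addSn -(K_stab IH2) -IH2 IH1; split=> //.
Qed.

Lemma K_bound i : #|K i.+1| <= #|K i| * #|K 1|.
Proof.
pose F := iter i f.
pose rep y := odflt z [pick x in K i.+1 | F x == y].
pose phi x := (F x, add x (rep (F x))).
have repP x : x \in K i.+1 -> rep (F x) \in K i.+1 /\ F (rep (F x)) = F x.
  move=> xK; rewrite /rep; case: pickP => [w /andP [wK /eqP ->] //|/(_ x)].
  by rewrite xK eqxx.
have -> : #|K i.+1| = #|phi @: K i.+1|.
  rewrite card_in_imset // => x y xK yK [E1 E2].
  apply: (@add_inj (rep (F x))); rewrite addC E2 -E1 addC //.
rewrite mulnC -cardsX subset_leq_card //; apply/subsetP => _ /imsetP [x xK ->].
have [rK rF] := repP x xK.
rewrite inE /= !inE; apply/andP; split.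
  by move: xK; rewrite inE.
by rewrite (additive_iter i fA) -/F rF addxx.
Qed.

Lemma K0 : K 0 = [set z].
Proof. by apply/setP => x; rewrite !inE. Qed.

Definition E i := trunc_log 2 #|K i|.

Lemma KE i : #|K i| = 2 ^ E i.
Proof. by rewrite /E; have [e ->] := pow2_closed (clK i); rewrite trunc_expnK. Qed.

Lemma E0 : E 0 = 0.
Proof. by rewrite /E K0 cards1. Qed.

Lemma E_mono i j : i <= j -> E i <= E j.
Proof.
move=> ij; rewrite -(leq_exp2l _ _ (isT : 1 < 2)) -!KE.
exact: subset_leq_card (K_mono ij).
Qed.

Lemma E_eqK i : E i = E i.+1 -> K i = K i.+1.
Proof.
by move=> Ei; apply/eqP; rewrite eqEcard K_sub !KE Ei leqnn.
Qed.

Lemma E_stab i : E i = E i.+1 -> forall j, i <= j -> E j = E i.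
Proof. by move=> /E_eqK Ki j ij; rewrite /E (K_stab_all Ki ij). Qed.

Lemma E_strict i : E i < E i.+1 -> i <= E i.
Proof.
elim: i => [//|i IH] H.
have : E i < E i.+1.
  rewrite ltn_neqAle E_mono // andbT; apply/eqP => Ei.
  have := E_stab Ei (j:=i.+1) (leqnSn i); move: H; rewrite (E_stab Ei (j:=i.+2)) //; lia.
by move=> /[dup] /IH; apply: leq_ltn_trans.
Qed.

Lemma E_bound i : E i.+1 <= E i + E 1.
Proof.
by rewrite -(leq_exp2l _ _ (isT : 1 < 2)) expnD -!KE K_bound.
Qed.

Lemma E_strict2 i k : i <= k -> E i < E k -> i <= E i.
Proof.
move=> ik H; apply: E_strict; rewrite ltn_neqAle E_mono // andbT.
apply/eqP => Ei; move: H; rewrite (E_stab Ei ik) ltnn //.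
Qed.

End KSec.

Lemma add_eqz y x : (add y x == z) = (y == x).
Proof.
apply/eqP/eqP => [H|->]; last exact: addxx.
by rewrite -(addK y x) H add0.
Qed.

Lemma odd_permX (s : {perm T}) n : odd_perm (s ^+ n)%g = odd n && odd_perm s.
Proof.
elim: n => [|n IH]; first by rewrite expg0 odd_perm1.
by rewrite expgS odd_permM IH /=; case: (odd_perm s); case: (odd n).
Qed.

Lemma arith c d j : c <= d -> j.+1 <= c ->
  odd ((2 ^ d - 2 ^ c) %/ 2 ^ j.+1) = (c == j.+1) && (c < d).
Proof.
move=> cd jc.
have -> : 2 ^ d - 2 ^ c = 2 ^ j.+1 * (2 ^ (c - j.+1) * (2 ^ (d - c) - 1)).
  rewrite mulnA -expnD subnKC // mulnBr muln1 -expnD subnKC //.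
rewrite mulKn ?expn_gt0 // oddM oddX /= orbF oddB ?expn_gt0 // oddX /= orbF.
rewrite subn_eq0 leqNgt; congr (_ && _).
  by rewrite -leqNgt eqn_leq jc andbT.
by rewrite subn_eq0 addbT -ltnNge.
Qed.

Lemma pow_bound j : 2 <= j -> j.+2 <= 2 ^ j.
Proof.
case: j => [//|k] k1; have := ltn_expl k (isT : 1 < 2).
rewrite expnS; set t := 2 ^ k; lia.
Qed.

Lemma core (g : {perm T}) m : additive g -> #|T| = 2 ^ m -> 2 < m ->
  odd_perm g = false.
Proof.
move=> gA cT m3.
set o := #[g]%g.
have o0 : 0 < o := order_gt0 g.
set b := o`_(2^'). set a := logn 2 o.
have ob : o = 2 ^ a * b by rewrite -p_part partnC.
have oddb : odd b.
  by have := part_pnat (2^') o; rewrite p'natE // dvdn2 negbK.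
set h := (g ^+ b)%g.
have hpow : (h ^+ (2 ^ a))%g = 1%g by rewrite -expgM mulnC -ob expg_order.
have -> : odd_perm g = odd_perm h by rewrite /h odd_permX oddb.
have hA : additive h by move=> x y; rewrite /h !permX; exact: (additive_iter b gA).
have hpA j : additive (h ^+ j)%g by move=> x y; rewrite !permX; exact: (additive_iter j hA).
clearbody a; clearbody h.
pose f := fun x => add (h x) x.
have fA : additive f by move=> x y; rewrite /f hA addACA.
have iterf : forall j x, iter (2 ^ j) f x = add ((h ^+ (2 ^ j))%g x) x.
  elim=> [|j IH] x; first by rewrite expg1.
  rewrite expnS mul2n -addnn iterD !IH hpA expgD permM.
  set H := (h ^+ (2 ^ j))%g.
  by rewrite -addA (addA (H x)) addxx add0.
have Kfix : forall j x, (x \in K f (2 ^ j)) = ((h ^+ (2 ^ j))%g x == x).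
  by move=> j x; rewrite inE iterf add_eqz.
have ordP x : exists2 e, e <= a & #|porbit h x| = 2 ^ e.
  apply/(dvdn_pfactor _ _ (isT : prime 2)); rewrite -porbit_dvd hpow perm1 //.
have sumE j : \sum_(x in T) (#|porbit h x| == 2 ^ j.+1) =
    #|K f (2 ^ j.+1)| - #|K f (2 ^ j)|.
  have sub : K f (2 ^ j) \subset K f (2 ^ j.+1).
    by apply: K_mono => //; rewrite leq_exp2l.
  rewrite -(setIidPr sub) -cardsD -sum1_card [RHS]big_mkcond /=.
  apply: eq_bigr => x _; rewrite !inE !iterf !add_eqz.
  rewrite !porbit_dvd; have [e _ ->] := ordP x.
  rewrite eqn_exp2l // !dvdn_Pexp2l // -ltnNge eqn_leq andbC.
  by case: (_ && _).
rewrite (odd_perm_pow2 hpow).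
pose Ef := E f.
pose t j := odd ((#|K f (2 ^ j.+1)| - #|K f (2 ^ j)|) %/ 2 ^ j.+1).
rewrite (eq_bigr (fun j : 'I_a => t j)); last by move=> j _; rewrite sumE.
have KEf i : #|K f i| = 2 ^ Ef i by exact: KE.
have top : Ef (2 ^ a) = m.
  apply/eqP; rewrite -(eqn_exp2l _ _ (isT : 1 < 2)) -KEf -cT; apply/eqP.
  by rewrite -cardsT; apply: eq_card => x; rewrite Kfix hpow perm1 !inE eqxx.
have stab i : Ef i = Ef i.+1 -> forall j, i <= j -> Ef j = Ef i by exact: E_stab.
have mono i j : i <= j -> Ef i <= Ef j by exact: E_mono.
have tE j : t j = (Ef (2 ^ j) == j.+1) && (Ef (2 ^ j) < Ef (2 ^ j.+1)).
  rewrite /t !KEf.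
  have le : 2 ^ j <= 2 ^ j.+1 by rewrite leq_exp2l.
  case: (ltngtP (Ef (2 ^ j)) (Ef (2 ^ j.+1))) => H.
  - have hs : j.+1 <= Ef (2 ^ j).
      exact: leq_trans (ltn_expl j (isT : 1 < 2)) (E_strict2 fA le H).
    by rewrite arith ?H ?(ltnW H).
  - by move: H; rewrite ltnNge mono.
  - by rewrite H subnn div0n andbF.
have tj2 j : 2 <= j -> t j = false.
  move=> j2; rewrite tE; apply/negP => /andP [/eqP H1 H2].
  have le : 2 ^ j <= 2 ^ j.+1 by rewrite leq_exp2l.
  have := E_strict2 fA le H2; rewrite -/Ef H1; have := pow_bound j2.
  set u := 2 ^ j; lia.
have E1 : Ef 1 != 0.
  apply/eqP => H; have H0 : Ef 0 = Ef 1 by rewrite H /Ef E0.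
  have := stab 0 H0 (2 ^ a) (leq0n _); rewrite top => Hm.
  by move: m3; rewrite Hm /Ef E0.
clearbody t.
have ta n : \big[addb/false]_(j < n) t j =
    (if 0 < n then t 0 else false) (+) (if 1 < n then t 1 else false).
  case: n => [|[|a']]; first by rewrite big_ord0.
    by rewrite big_ord_recl big_ord0.
  rewrite !big_ord_recl big1 ?addbF // => j _; exact: tj2.
rewrite ta !tE.
have b2 : Ef 2 <= Ef 1 + Ef 1 := E_bound fA 1.
have b3 : Ef 3 <= Ef 2 + Ef 1 := E_bound fA 2.
have m12 := mono 1 2 isT; have m23 := mono 2 3 isT; have m34 := mono 3 4 isT.
have pa : 0 < 2 ^ a by rewrite expn_gt0.
have s1 : Ef 1 = Ef 2 -> Ef 4 = Ef 1 /\ m = Ef 1.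
  by move=> H; split; [apply: stab | rewrite -top; apply: stab].
have s2 : Ef 2 = Ef 3 -> 2 <= 2 ^ a -> m = Ef 2.
  by move=> H ha; rewrite -top; apply: stab.
have E1' := E1; move: E1' => /eqP E1'.
rewrite /= expn0 expn1.
case: a top pa s2 {ob hpow ordP sumE ta} => [|[|a']] top pa s2.
- by [].
- rewrite /= addbF; apply/negP => /andP [/eqP H1 H2].
  move: top; rewrite expn1 => top.
  lia.
- rewrite /= (_ : 2 ^ 2 = 4) //.
  have ha : 2 <= 2 ^ a'.+2 by rewrite (leq_exp2l 1).
  have [H1|H1] := eqVneq (Ef 1) 1.
  + have E2 : Ef 2 = 2.
      case: (ltngtP (Ef 1) (Ef 2)) => H; [lia | lia | ].
      by have [_ Hm] := s1 H; lia.
    have E3 : Ef 3 = 3.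
      case: (ltngtP (Ef 2) (Ef 3)) => H; [lia | lia | ].
      by have Hm := s2 H ha; lia.
    rewrite H1 E2 eqxx /=.
    by have -> : 2 < Ef 4 by lia.
  + rewrite /=; apply/negP => /andP [/eqP H2 H3].
    have : Ef 1 = Ef 2 by move: H1 => /eqP; lia.
    move=> /s1 [H4 _]; lia.
Qed.
End Core.
Local Open Scope ring_scope.
Lemma transport (R : zmodType) (rs : seq R) (sg : R -> R) (s : 'S_(size rs)) m :
  (forall x : R, x + x = 0) -> uniq (0 :: rs) ->
  (forall x y, x \in 0 :: rs -> y \in 0 :: rs -> x + y \in 0 :: rs) ->
  sg 0 = 0 -> (forall x y, sg (x + y) = sg x + sg y) ->
  (forall i : 'I_(size rs), sg rs`_i = rs`_(s i)) ->
  (size rs).+1 = (2 ^ m)%N -> (2 < m)%N -> ~~ odd_perm s.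
Proof.
move=> xx U cl sg0 sgD hs cT m3.
pose d (j : 'I_(size rs).+1) := nth 0 (0 :: rs) j.
have d_inj : injective d.
  by move=> i j /eqP; rewrite /d nth_uniq // => /eqP /val_inj.
have d_mem j : d j \in 0 :: rs by rewrite /d mem_nth.
pose addT (a b : 'I_(size rs).+1) : 'I_(size rs).+1 := inord (index (d a + d b) (0 :: rs)).
have dadd a b : d (addT a b) = d a + d b.
  by rewrite /d /addT inordK ?nth_index ?cl // -[(size rs).+1]/(size (0 :: rs)) index_mem cl.
have d0 : d ord0 = 0 by [].
have addA : associative addT by move=> a b c; apply: d_inj; rewrite !dadd addrA.
have addC : commutative addT by move=> a b; apply: d_inj; rewrite !dadd addrC.
have add0 : left_id ord0 addT by move=> a; apply: d_inj; rewrite !dadd d0 add0r.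
have addxx a : addT a a = ord0 by apply: d_inj; rewrite dadd xx.
pose h := lift_perm ord0 ord0 s.
have dh j : d (h j) = sg (d j).
  case: (unliftP ord0 j) => [i ->| ->]; last by rewrite lift_perm_id d0 sg0.
  by rewrite lift_perm_lift /d !lift0 /= hs.
have hA : additive addT h by move=> x y; apply: d_inj; rewrite dh !dadd !dh sgD.
have := core addA addC add0 addxx hA _ m3.
rewrite card_ord => /(_ cT).
by rewrite odd_lift_perm /= => ->.
Qed.

Definition Lq (F : fieldType) (q n : nat) (a : nat -> F) : {poly F} :=
  \sum_(i < n.+1) (a i)%:P * 'X^(q ^ i).
Definition ev (F : fieldType) (E : fieldExtType F) (q n : nat) (a : nat -> F) (x : E) :=
  \sum_(i < n.+1) in_alg E (a i) * x ^+ (q ^ i).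
Arguments ev {F} E q n a x.

Section Poly.
Variables (F : fieldType) (E : fieldExtType F).
Hypothesis ch2 : (2 \in [pchar F])%N.

Lemma chE : (2 \in [pchar E])%N.
Proof. by rewrite (pchar_lalg E 2). Qed.

Lemma xxE (x : E) : x + x = 0.
Proof. exact: (addrr_pchar2 chE). Qed.

Lemma frobE (x y : E) j : (x + y) ^+ (2 ^ j) = x ^+ (2 ^ j) + y ^+ (2 ^ j).
Proof.
elim: j => [|j IH]; first by rewrite expn0 !expr1.
by rewrite expnSr !exprM IH sqrrD mulr2n xxE addr0.
Qed.

Variables (q k n : nat) (a : nat -> F).
Hypothesis qk : q = (2 ^ k)%N.

Lemma Lx_ev x : (map_poly (in_alg E) (Lq q n a)).[x] = ev E q n a x.
Proof.
rewrite /Lq rmorph_sum horner_sum; apply: eq_bigr => i _.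
by rewrite rmorphM /= map_polyC map_polyXn hornerCM hornerXn.
Qed.

Lemma ev_add x y : ev E q n a (x + y) = ev E q n a x + ev E q n a y.
Proof.
rewrite /ev -big_split; apply: eq_bigr => i _.
by rewrite qk -expnM frobE mulrDr.
Qed.

Lemma ev0 : ev E q n a 0 = 0.
Proof.
rewrite /ev big1 // => i _.
by rewrite expr0n qk -expnM expn_eq0 /= mulr0.
Qed.

Lemma size_Lq : a n != 0 -> (1 < q)%N -> size (Lq q n a) = (q ^ n).+1.
Proof.
move=> an q1.
rewrite /Lq big_ord_recr /= addrC size_polyDl size_Cmul ?size_polyXn //.
rewrite ltnS.
apply: leq_trans (size_sum _ _ _) _; apply/bigmax_leqP => i _.
rewrite mul_polyC (leq_trans (size_scale_leq _ _)) // size_polyXn.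
by rewrite ltn_exp2l.
Qed.
End Poly.

Theorem theorem8 (q k n : nat) (F : fieldType) (E : splittingFieldType F)
    (L : {poly F}) (rs : seq E) :
  (0 < k)%N -> q = (2 ^ k)%N ->
  (2 \in [pchar F])%N ->
  contains_Fq F q ->
  is_qpoly q n L ->
  separable_poly L ->
  splittingFieldFor 1%VS (map_poly (in_alg E) L) fullv ->
  uniq rs ->
  (forall x : E, x \in rs <-> root (map_poly (in_alg E) (L %/ 'X)) x) ->
  ~~ ((q == 2) && (n == 2))%N ->
  forall sigma : gal_of (fullv : {vspace E}), sigma \in ('Gal(fullv / 1%VS))%g ->
  forall s : 'S_(size rs),
    (forall i : 'I_(size rs), sigma rs`_i = rs`_(s i)) ->
    ~~ odd_perm s.
Proof.
move=> k0 qk ch2 [K [f cK]] [a [an Ldef]] sepL split U memb notex sigma Hsig s hs.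
have q1 : (1 < q)%N by rewrite qk -{1}(expn0 2) ltn_exp2l.
subst L; rewrite -/(Lq q n a) in sepL split memb *.
set Lx := map_poly (in_alg E) (Lq q n a).
have L0 : root Lx 0 by rewrite /root Lx_ev (ev0 E n a qk).
have XdL : 'X %| Lx by move: L0; rewrite root_factor_theorem polyC0 subr0.
have Mdef : map_poly (in_alg E) (Lq q n a %/ 'X) = Lx %/ 'X by rewrite map_divp map_polyX.
rewrite Mdef in memb.
set M := Lx %/ 'X.
have LxM : Lx = M * 'X by rewrite divpK.
have sepLx : separable_poly Lx by rewrite separable_map.
have M0 : ~~ root M 0.
  by move: sepLx; rewrite LxM separable_mul => /and3P [_ _]; rewrite coprimepX.
have rs0 : 0 \notin rs by apply/negP => /memb; apply/negP.
have U0 : uniq (0 :: rs) by rewrite /= rs0 U.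
have memV x : (x \in 0 :: rs) = (ev E q n a x == 0).
  rewrite inE; have -> : (x \in rs) = root M x by apply/idP/idP => /memb.
  by rewrite -Lx_ev -/Lx LxM hornerMX mulf_eq0 orbC.
have clV x y : x \in 0 :: rs -> y \in 0 :: rs -> x + y \in 0 :: rs.
  by rewrite !memV (ev_add ch2 n a qk) => /eqP -> /eqP ->; rewrite addr0.
have cnt : (size rs).+1 = (q ^ n)%N.
  case: split => rs1 Hp _.
  have Urs1 : uniq rs1 by rewrite -separable_prod_XsubC -(eqp_separable Hp).
  have pe : perm_eq (0 :: rs) rs1.
    apply: uniq_perm => // x.
    by rewrite memV -root_prod_XsubC -(eqp_root Hp) /root Lx_ev.
  rewrite -[(size rs).+1]/(size (0 :: rs)) (perm_size pe).
  have := eqp_size Hp; rewrite size_prod_XsubC size_map_poly size_Lq //.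
  by case.
have [small|big] := leqP (size rs) 1.
  by rewrite (permS01 small s) odd_perm1.
have [k3|k3] := leqP 3 (k * n).
  apply: (transport (m := (k * n)%N) (xxE ch2) U0 clV _ _ hs) => //.
  - exact: rmorph0.
  - by move=> x y; rewrite rmorphD.
  - by rewrite cnt qk -expnM.
have [k2 n1] : k = 2%N /\ n = 1%N.
  have n0 : n != 0%N.
    by apply/eqP => n0; move: cnt big; rewrite n0 expn0; case: (size rs).
  have nk : (n <= k * n)%N by rewrite leq_pmull.
  have kn : (k <= k * n)%N by rewrite leq_pmulr // lt0n.
  have [[k1 n1]|[[k1 n1]|[k1 n1]]] :
    (k = 1 /\ n = 1 \/ k = 1 /\ n = 2 \/ k = 2 /\ n = 1)%N.
    move: n0; rewrite -lt0n => n0; lia.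
  - by move: cnt big; rewrite qk k1 n1 => -[->].
  - by move: notex; rewrite qk k1 n1.
  - by [].
subst k n.
have q4 : q = 4%N by rewrite qk.
have evE y : ev E q 1 a y = in_alg E (a 0%N) * y + in_alg E (a 1%N) * y ^+ 4.
  by rewrite /ev big_ord_recr big_ord1 /= q4 expn0 expn1 expr1.
have a1E : in_alg E (a 1%N) != 0 by rewrite fmorph_eq0.
have cube y : y \in rs -> in_alg E (a 1%N) * y ^+ 3 = - in_alg E (a 0%N).
  move=> yrs; have y0 : y != 0 by apply: contraNneq rs0 => <-.
  have : ev E q 1 a y == 0 by rewrite -memV inE yrs orbT.
  rewrite evE.
  have -> : in_alg E (a 0%N) * y + in_alg E (a 1%N) * y ^+ 4 =
            y * (in_alg E (a 1%N) * y ^+ 3 + in_alg E (a 0%N)) by ring.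
  by rewrite mulf_eq0 (negbTE y0) /= addr_eq0 => /eqP.
have [w /andP [w0 w1]] : exists w : K, (w != 0) && (w != 1).
  apply/existsP; apply: contraT; rewrite negb_exists => /forallP H.
  have : (#|K| <= 2)%N.
    rewrite -cardsT; apply: leq_trans (subset_leq_card (_ : [set: K] \subset [set 0; 1])) _.
      apply/subsetP => x _; rewrite !inE; have := H x; rewrite negb_and !negbK.
      by [].
    by rewrite cards2; case: (_ != _).
  by rewrite cK q4.
have w4 : w ^+ 4 = w by rewrite -{2}(expf_card w) cK q4.
have w3 : w ^+ 3 = 1.
  by apply: (mulfI w0); rewrite -exprS w4 mulr1.
have wZ : w ^+ 2 + w + 1 = 0.
  have : (w - 1) * (w ^+ 2 + w + 1) = 0.
    have -> : (w - 1) * (w ^+ 2 + w + 1) = w ^+ 3 - 1 by ring.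
    by rewrite w3 subrr.
  by move/eqP; rewrite mulf_eq0 subr_eq0 (negbTE w1) => /eqP.
pose zeta := in_alg E (f w).
have zZ : zeta ^+ 2 + zeta + 1 = 0.
  have := congr1 f wZ; rewrite !rmorphD rmorphXn rmorph1 rmorph0 => H.
  have := congr1 (in_alg E) H; rewrite !rmorphD rmorphXn rmorph1 rmorph0.
  by [].
have cr d : d ^+ 3 = 1 -> exists c : F, d = in_alg E c.
  move=> d3.
  have : (d - 1) * (d - zeta) * (d - zeta ^+ 2) = 0.
    have -> : (d - 1) * (d - zeta) * (d - zeta ^+ 2) =
      d ^+ 3 - 1 - (zeta ^+ 2 + zeta + 1) * (d ^+ 2 - zeta * d + zeta - 1) by ring.
    by rewrite zZ mul0r subr0 d3 subrr.
  move/eqP; rewrite !mulf_eq0 !subr_eq0 => /orP [/orP [/eqP -> | /eqP ->] | /eqP ->].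
  - by exists 1; rewrite rmorph1.
  - by exists (f w).
  - by exists (f w ^+ 2); rewrite rmorphXn.
have fixc c : sigma (in_alg E c) = in_alg E c.
  by apply: (fixed_gal (subvf _) Hsig); rewrite rpredZ // memv_line.
have step (i : 'I_(size rs)) : sigma (sigma (sigma rs`_i)) = rs`_i.
  set y := rs`_i.
  have yrs : y \in rs := mem_nth 0 (ltn_ord i).
  have y0 : y != 0 by apply: contraNneq rs0 => <-.
  have y'rs : sigma y \in rs by rewrite /y hs (mem_nth 0 (ltn_ord (s i))).
  have eq3 : sigma y ^+ 3 = y ^+ 3 by apply: (mulfI a1E); rewrite !cube.
  pose c := sigma y / y.
  have c3 : c ^+ 3 = 1 by rewrite /c exprMn exprVn eq3 divff // expf_neq0.
  have [c0 hc0] := cr c c3.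
  have sc : sigma c = c by rewrite hc0 fixc.
  have sy : sigma y = c * y by rewrite /c divfK.
  have sz z : sigma (c * z) = c * sigma z.
    by rewrite rmorphM; congr (_ * _); exact: sc.
  rewrite sy !sz sy.
  rewrite sz sy; have -> : c * (c * (c * y)) = c ^+ 3 * y by ring.
  by rewrite c3 mul1r.
have s3 (i : 'I_(size rs)) : s (s (s i)) = i.
  have : rs`_(s (s (s i))) = rs`_i by rewrite -!hs step.
  move/eqP; rewrite nth_uniq // => /eqP; exact: val_inj.
have S3 : (s ^+ 3)%g = 1%g by apply/permP => i; rewrite permX /= perm1 s3.
have := odd_permX s 3; rewrite S3 odd_perm1 /= => <-.
by [].
Qed.
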